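(* Let $\{\ell_k\}_{k\in\mathbb{N}_0}$ be a sequence of nonnegative integers. Then the sequence $\{a^{\ell_k}\}_{k\in\mathbb{N}_0}$ is a positive sequence for every $a\in\mathbb{R}$ if and only if there exist $d\in\mathbb{N}_0$ and $\ell_0\in 2\mathbb{N}_0$ such that $\ell_k=kd+\ell_0$ for all $k\in\mathbb{N}_0$ (i.e. $\ell_0$ is even and $\{\ell_k\}$ is a nondecreasing arithmetic progression).
   Context: A sequence of real numbers $\{s_k\}_{k\in\mathbb{N}_0}$ is called positive if for every $n\in\mathbb{N}_0$ the Hankel matrix $(s_{i+j})_{i,j=0}^n$ is positive semidefinite. The convention $0^0=1$ is used. *)

(* Defs.v *)
From Stdlib Require Import Reals.
Open Scope R_scope.

Definition hankel_qform (s : nat -> R) (n : nat) (x : nat -> R) : R :=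
  sum_f_R0 (fun i => sum_f_R0 (fun j => x i * s (i + j)%nat * x j) n) n.

Definition hankel_psd (s : nat -> R) (n : nat) : Prop :=
  forall x : nat -> R, 0 <= hankel_qform s n x.

Definition positive_seq (s : nat -> R) : Prop :=
  forall n : nat, hankel_psd s n.

(* Main.v *)
Require Import Defs.
From Stdlib Require Import Reals Arith.
From Stdlib Require Import Lra Lia Psatz.
Open Scope R_scope.

Lemma sum_zero (f : nat -> R) (n : nat) :
  (forall k, (k <= n)%nat -> f k = 0) -> sum_f_R0 f n = 0.
Proof.
  intro H. rewrite (sum_eq f (fun _ => 0)); auto.
  rewrite sum_cte; ring.
Qed.

Lemma sum_one (f : nat -> R) (i n : nat) :
  (i <= n)%nat -> (forall k, (k <= n)%nat -> k <> i -> f k = 0) -> sum_f_R0 f n = f i.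
Proof.
  intros Hi H. induction n as [|n IH].
  - assert (i = 0%nat) by lia. subst. reflexivity.
  - rewrite tech5. destruct (Nat.eq_dec i (S n)).
    + subst. rewrite sum_zero. ring. intros k Hk. apply H; lia.
    + rewrite IH; try lia. rewrite (H (S n)) by lia. ring. intros k Hk Hk'. apply H; lia.
Qed.

Lemma sum_two (f : nat -> R) (i j n : nat) :
  (i < j)%nat -> (j <= n)%nat -> (forall k, k <> i -> k <> j -> f k = 0) ->
  sum_f_R0 f n = f i + f j.
Proof.
  intros Hij Hj H. induction n as [|n IH].
  - lia.
  - rewrite tech5. destruct (Nat.eq_dec j (S n)).
    + subst. rewrite (sum_one f i). ring. lia. intros k Hk Hk'.
      apply H; lia.
    + rewrite IH by lia. rewrite (H (S n)) by lia. ring.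
Qed.

Definition xv (u v : R) (i j : nat) : nat -> R :=
  fun k => if Nat.eq_dec k i then u else if Nat.eq_dec k j then v else 0.

Lemma qform_two s (i j : nat) u v : (i < j)%nat ->
  hankel_qform s j (xv u v i j) =
  u * s (i + i)%nat * u + u * s (i + j)%nat * v +
  (v * s (j + i)%nat * u + v * s (j + j)%nat * v).
Proof.
  intro Hij. unfold hankel_qform.
  assert (Hx : forall k, k <> i -> k <> j -> xv u v i j k = 0).
  { intros k H1 H2. unfold xv. destruct (Nat.eq_dec k i); try lia.
    destruct (Nat.eq_dec k j); lia || reflexivity. }
  assert (Hxi : xv u v i j i = u).
  { unfold xv. destruct (Nat.eq_dec i i); lia || reflexivity. }
  assert (Hxj : xv u v i j j = v).
  { unfold xv. destruct (Nat.eq_dec j i); try lia. destruct (Nat.eq_dec j j); lia || reflexivity. }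
  rewrite (sum_two _ i j j); auto.
  - rewrite (sum_two _ i j j); auto.
    + rewrite (sum_two _ i j j); auto.
      * rewrite Hxi, Hxj. ring.
      * intros k H1 H2. rewrite (Hx k); auto; ring.
    + intros k H1 H2. rewrite (Hx k); auto; ring.
  - intros k H1 H2. apply sum_zero. intros m _. rewrite (Hx k); auto; ring.
Qed.

Lemma minor s (i j : nat) : positive_seq s -> (i < j)%nat -> 0 < s (i + i)%nat ->
  s (i + j)%nat * s (i + j)%nat <= s (i + i)%nat * s (j + j)%nat.
Proof.
  intros Hp Hij HA.
  pose proof (Hp j (xv (- s (i + j)%nat) (s (i + i)%nat) i j)) as H.
  rewrite qform_two in H by auto. rewrite (Nat.add_comm j i) in H.
  set (A := s (i+i)%nat) in *. set (B := s (i+j)%nat) in *. set (C := s (j+j)%nat) in *.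
  assert (0 <= A * (A * C - B * B)) by nra.
  assert (0 <= A * C - B * B).
  { destruct (Rle_or_lt 0 (A*C - B*B)); auto. nra. }
  lra.
Qed.

Lemma pow_eq_nat (p q : nat) : (forall a, 0 < a -> a ^ q <= a ^ p) -> p = q.
Proof.
  intro H. destruct (lt_eq_lt_dec p q) as [[Hl|]|Hl]; auto.
  - pose proof (Rlt_pow 2 p q ltac:(lra) Hl). pose proof (H 2 ltac:(lra)). lra.
  - pose proof (Rlt_pow 2 q p ltac:(lra) Hl). pose proof (H (/2) ltac:(lra)).
    rewrite !pow_inv in H1.
    assert (0 < 2 ^ q) by (apply pow_lt; lra).
    assert (0 < 2 ^ p) by (apply pow_lt; lra). pose proof (Rinv_lt_contravar _ _ (Rmult_lt_0_compat _ _ H2 H3) H0). lra.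
Qed.

Lemma keyE (l : nat -> nat) : (forall a : R, positive_seq (fun k => a ^ (l k))) ->
  forall i j, (l (i + i) + l (j + j) = l (i + j) + l (i + j))%nat.
Proof.
  intros Hp.
  assert (Hlt : forall i j, (i < j)%nat -> (l (i + i) + l (j + j) = l (i + j) + l (i + j))%nat).
  { intros i j Hij. apply pow_eq_nat. intros a Ha.
    rewrite !pow_add. apply (minor (fun k => a ^ (l k))); auto.
    apply pow_lt; auto. }
  intros i j. destruct (lt_eq_lt_dec i j) as [[H|H]|H].
  - auto.
  - subst. reflexivity.
  - specialize (Hlt j i H). rewrite (Nat.add_comm i j). lia.
Qed.

Theorem mainTheorem3 (l : nat -> nat) :
  (forall a : R, positive_seq (fun k => a ^ (l k))) <->
  (exists d l0 : nat, Nat.Even l0 /\ forall k : nat, l k = (k * d + l0)%nat).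
Proof.
  split.
  - intro Hp.
    assert (Hev : Nat.Even (l 0%nat)).
    { destruct (Nat.Even_or_Odd (l 0%nat)) as [|[m Hm]]; auto.
      exfalso. pose proof (Hp (-1) 0%nat (fun _ => 1)) as H.
      unfold hankel_qform in H. simpl in H. rewrite Hm in H.
      replace (2 * m + 1)%nat with (S (2 * m)) in H by lia.
      rewrite pow_1_odd in H. lra. }
    pose proof (keyE l Hp) as E.
    assert (Hrec : forall k, (l (S k) + l 0 = l k + l 1)%nat).
    { intro k. pose proof (E 0%nat k). pose proof (E 1%nat k). pose proof (E 0%nat 1%nat).
      simpl in *. lia. }
    assert (Hind : forall k, (l k + k * l 0 = k * l 1 + l 0)%nat).
    { induction k. simpl. lia. specialize (Hrec k). rewrite !Nat.mul_succ_l. lia. }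
    assert (Hle : (l 0 <= l 1)%nat).
    { destruct (le_lt_dec (l 0%nat) (l 1%nat)); auto.
      specialize (Hind (S (l 0%nat))). nia. }
    exists (l 1 - l 0)%nat, (l 0%nat). split; auto.
    intro k. specialize (Hind k).
    replace (l 1%nat) with ((l 1 - l 0) + l 0)%nat in Hind by lia.
    rewrite Nat.mul_add_distr_l in Hind. lia.
  - intros [d [l0 [[m Hm] Hl]]] a n x.
    unfold hankel_qform.
    set (y := fun i => x i * a ^ (i * d)).
    assert (Heq : sum_f_R0 (fun i => sum_f_R0 (fun j => x i * a ^ l (i + j)%nat * x j) n) n
                  = a ^ l0 * sum_f_R0 y n * sum_f_R0 y n).
    { transitivity (sum_f_R0 (fun i => (a^l0 * y i) * sum_f_R0 y n) n).
      - apply sum_eq. intros i _. rewrite scal_sum. apply sum_eq. intros j _.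
        rewrite Hl. unfold y. rewrite Nat.mul_add_distr_r, !pow_add. ring.
      - rewrite <- scal_sum.
        rewrite (sum_eq (fun i => a ^ l0 * y i) (fun i => y i * a ^ l0)) by (intros; ring).
        rewrite <- scal_sum. ring. }
    rewrite Heq, Hm, pow_mult.
    set (S := sum_f_R0 y n). set (b := a ^ 2).
    assert (0 <= b) by (unfold b; simpl; nra).
    assert (0 <= b ^ m) by (apply pow_le; auto).
    rewrite Rmult_assoc. apply Rmult_le_pos; auto. nra.
Qed.
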